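(* Let $\omega=f\,dz^k$ be a nonzero $\chi$-automorphic form for $\widetilde\Gamma$ and let $n_a,n_b$ be the orders of vanishing of $f$ at $a$ and $b$. Then $$\chi(\alpha)=e^{2\pi i\frac{k+n_a}{p}},\qquad \chi(\beta)=e^{2\pi i\frac{k+n_b}{q}},$$ and consequently $\chi(x)=e^{2\pi i\frac{k}{pq}}\,e^{2\pi i\frac{qq_1n_a+pp_1n_b}{pq}}$.
   Context: Fix coprime integers $2\le p<q$ and integers $p_1,q_1$ with $pp_1+qq_1=1$. $\widetilde{SL_2}(\mathbb R)$ is the universal covering group of $PSL_2(\mathbb R)$ (covering map $\tilde P$), acting on the upper half plane $\mathbb H^2$ via $\tilde P$. $\widetilde{\mathbb C^\times}=\{e^u:u\in\mathbb C\}$ is the universal cover of $\mathbb C^\times$, $(e^u)^k=e^{ku}$ for $k\in\mathbb Q$, bar = projection to $\mathbb C^\times$. For $\gamma\in\widetilde{SL_2}(\mathbb R)$, $\gamma'\colon\mathbb H^2\to\widetilde{\mathbb C^\times}$ is the lift of $\frac d{dz}\tilde P(\gamma)(z)$ continuous in $\gamma$ with $\mathrm{id}'=1$, and $\gamma(z,w)=(\gamma z,\gamma'(z)w)$. The center is generated by $c$, with $\tilde P(c)=1$ and $c'\equiv e^{2\pi i}$. A degree-$k$ form is $f\,dz^k:(z,w)\mapsto f(z)\overline{w^k}$ with $f$ holomorphic. Let $\alpha_0,\beta_0$ be the classes of $\begin{pmatrix}2\cos(\pi/p)&1\\-1&0\end{pmatrix}$, $\begin{pmatrix}0&1\\-1&2\cos(\pi/q)\end{pmatrix}$,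 with fixed points $a=-\cos(\pi/p)+i\sin(\pi/p)$, $b=\cos(\pi/q)+i\sin(\pi/q)$; $\Gamma_{p,q}=\langle\alpha_0,\beta_0\rangle$; $\widetilde\Gamma=\tilde P^{-1}(\Gamma_{p,q})$; $\alpha,\beta$ the unique lifts of $\alpha_0,\beta_0$ with $\alpha^p=\beta^q=c$; $x=\alpha^{q_1}\beta^{p_1}$. A form $\omega$ is $\chi$-automorphic for a character $\chi\colon\widetilde\Gamma\to U(1)$ if $\omega\circ\gamma=\chi(\gamma)\omega$ for all $\gamma\in\widetilde\Gamma$ and $f$ is bounded on $\{\operatorname{Im}z\ge1\}$. *)

(* Defs.v *)
From Stdlib Require Import Reals ZArith QArith Qreals.
Open Scope R_scope.

Definition Cplx : Type := (R * R)%type.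
Definition RtoC (x : R) : Cplx := (x, 0).
Definition C0 : Cplx := (0, 0).
Definition Cadd (z w : Cplx) : Cplx := (fst z + fst w, snd z + snd w).
Definition Copp (z : Cplx) : Cplx := (- fst z, - snd z).
Definition Csub (z w : Cplx) : Cplx := Cadd z (Copp w).
Definition Cmul (z w : Cplx) : Cplx :=
  (fst z * fst w - snd z * snd w, fst z * snd w + snd z * fst w).
Definition Cnorm (z : Cplx) : R := sqrt (fst z ^ 2 + snd z ^ 2).
Definition Cinv (z : Cplx) : Cplx :=
  let r := fst z ^ 2 + snd z ^ 2 in (fst z / r, - snd z / r).
Definition Cdiv (z w : Cplx) : Cplx := Cmul z (Cinv w).
(* exp : Cplx -> Cplx^x ; also the projection  ~Cplx^x = {e^u} -> Cplx^x,  e^u |-> exp u *)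
Definition Cexp (z : Cplx) : Cplx := (exp (fst z) * cos (snd z), exp (fst z) * sin (snd z)).
Fixpoint Cpow (z : Cplx) (n : nat) : Cplx :=
  match n with O => (1, 0) | S m => Cmul z (Cpow z m) end.
Definition e2pii (r : R) : Cplx := Cexp (0, 2 * PI * r).

Definition UHP (z : Cplx) : Prop := 0 < snd z.

Definition C_differentiable_at (f : Cplx -> Cplx) (z0 : Cplx) : Prop :=
  exists l : Cplx, forall eps, 0 < eps -> exists delta, 0 < delta /\
    forall z, 0 < Cnorm (Csub z z0) < delta ->
      Cnorm (Csub (Cdiv (Csub (f z) (f z0)) (Csub z z0)) l) < eps.

Definition holomorphic_on_H (f : Cplx -> Cplx) : Prop :=
  forall z, UHP z -> C_differentiable_at f z.

Definition continuous_on_H (f : Cplx -> Cplx) : Prop :=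
  forall z0, UHP z0 -> forall eps, 0 < eps -> exists delta, 0 < delta /\
    forall z, UHP z -> Cnorm (Csub z z0) < delta -> Cnorm (Csub (f z) (f z0)) < eps.

Definition vanishing_order (f : Cplx -> Cplx) (a : Cplx) (n : nat) : Prop :=
  exists g : Cplx -> Cplx, holomorphic_on_H g /\ g a <> C0 /\
    forall z, UHP z -> f z = Cmul (Cpow (Csub z a) n) (g z).

Record mat := Mat { ma : R; mb : R; mc : R; md : R }.
Definition mdet (m : mat) : R := ma m * md m - mb m * mc m.
Definition mid : mat := Mat 1 0 0 1.
Definition mneg (m : mat) : mat := Mat (- ma m) (- mb m) (- mc m) (- md m).
Definition mmul (m n : mat) : mat :=
  Mat (ma m * ma n + mb m * mc n) (ma m * mb n + mb m * md n)
      (mc m * ma n + md m * mc n) (mc m * mb n + md m * md n).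
(* inverse of a determinant-one matrix *)
Definition minv (m : mat) : mat := Mat (md m) (- mb m) (- mc m) (ma m).

Definition mob (m : mat) (z : Cplx) : Cplx :=
  Cdiv (Cadd (Cmul (RtoC (ma m)) z) (RtoC (mb m)))
       (Cadd (Cmul (RtoC (mc m)) z) (RtoC (md m))).
(* derivative of z |-> mob m z for det m = 1 *)
Definition mob_deriv (m : mat) (z : Cplx) : Cplx :=
  Cinv (Cpow (Cadd (Cmul (RtoC (mc m)) z) (RtoC (md m))) 2).

Definition alpha0_mat (p : nat) : mat := Mat (2 * cos (PI / INR p)) 1 (-1) 0.
Definition beta0_mat (q : nat) : mat := Mat 0 1 (-1) (2 * cos (PI / INR q)).
Definition pt_a (p : nat) : Cplx := (- cos (PI / INR p), sin (PI / INR p)).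
Definition pt_b (q : nat) : Cplx := (cos (PI / INR q), sin (PI / INR q)).

(* matrices of SL_2(R) whose class in PSL_2(R) lies in Gamma_{p,q} *)
Inductive in_Gamma (p q : nat) : mat -> Prop :=
| G_id : in_Gamma p q mid
| G_neg m : in_Gamma p q m -> in_Gamma p q (mneg m)
| G_a m : in_Gamma p q m -> in_Gamma p q (mmul (alpha0_mat p) m)
| G_ai m : in_Gamma p q m -> in_Gamma p q (mmul (minv (alpha0_mat p)) m)
| G_b m : in_Gamma p q m -> in_Gamma p q (mmul (beta0_mat q) m)
| G_bi m : in_Gamma p q m -> in_Gamma p q (mmul (minv (beta0_mat q)) m).

(* ---------- the universal cover ~SL_2(R) ----------
   An element gamma is a pair (g, L) with g in SL_2(R) (representing P(gamma)
   = class of g in PSL_2(R)) and L a continuous logarithm on H of the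
   derivative of the Moebius map g; gamma'(z) = e^{L z} in ~Cplx^x = {e^u}. *)
Record tilde := Tl { tmat : mat; tlog : Cplx -> Cplx }.

Definition is_lift (g : tilde) : Prop :=
  mdet (tmat g) = 1 /\ continuous_on_H (tlog g) /\
  forall z, UHP z -> Cexp (tlog g z) = mob_deriv (tmat g) z.

Definition teq (g h : tilde) : Prop :=
  (tmat g = tmat h \/ tmat g = mneg (tmat h)) /\
  forall z, UHP z -> tlog g z = tlog h z.

Definition tmul (g h : tilde) : tilde :=
  Tl (mmul (tmat g) (tmat h)) (fun z => Cadd (tlog g (mob (tmat h) z)) (tlog h z)).
Definition tid : tilde := Tl mid (fun _ => C0).
Definition tinv (g : tilde) : tilde :=
  Tl (minv (tmat g)) (fun z => Copp (tlog g (mob (minv (tmat g)) z))).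
(* central generator c : P(c) = 1, c' = e^{2 pi i} *)
Definition tc : tilde := Tl mid (fun _ => (0, 2 * PI)).

Fixpoint tpow (g : tilde) (n : nat) : tilde :=
  match n with O => tid | S m => tmul g (tpow g m) end.
Definition tzpow (g : tilde) (n : Z) : tilde :=
  match n with
  | Z0 => tid
  | Zpos k => tpow g (Pos.to_nat k)
  | Zneg k => tpow (tinv g) (Pos.to_nat k)
  end.

Definition in_tGamma (p q : nat) (g : tilde) : Prop :=
  is_lift g /\ in_Gamma p q (tmat g).

Definition is_alpha (p : nat) (g : tilde) : Prop :=
  is_lift g /\ (tmat g = alpha0_mat p \/ tmat g = mneg (alpha0_mat p)) /\
  teq (tpow g p) tc.
Definition is_beta (q : nat) (g : tilde) : Prop :=
  is_lift g /\ (tmat g = beta0_mat q \/ tmat g = mneg (beta0_mat q)) /\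
  teq (tpow g q) tc.

Definition is_character (p q : nat) (chi : tilde -> Cplx) : Prop :=
  (forall g h, in_tGamma p q g -> in_tGamma p q h -> teq g h -> chi g = chi h) /\
  (forall g h, in_tGamma p q g -> in_tGamma p q h ->
     chi (tmul g h) = Cmul (chi g) (chi h)) /\
  (forall g, in_tGamma p q g -> Cnorm (chi g) = 1).

(* omega = f dz^k : (z, e^u) |-> f z * exp (k u);
   gamma (z, e^u) = (gamma z, e^{L z + u}) *)
Definition omega (k : Q) (f : Cplx -> Cplx) (z u : Cplx) : Cplx :=
  Cmul (f z) (Cexp (Cmul (RtoC (Q2R k)) u)).

Definition chi_automorphic (p q : nat) (chi : tilde -> Cplx) (k : Q) (f : Cplx -> Cplx) : Prop :=
  holomorphic_on_H f /\
  (forall g, in_tGamma p q g -> forall z u, UHP z ->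
     omega k f (mob (tmat g) z) (Cadd (tlog g z) u) = Cmul (chi g) (omega k f z u)) /\
  (exists M, forall z, 1 <= snd z -> Cnorm (f z) <= M).

(* Main.v *)
Require Import Defs.
From Stdlib Require Import Reals ZArith QArith Qreals Lra Lia Psatz Classical ClassicalEpsilon.
Open Scope R_scope.

Lemma Cnorm_eq x y : Cnorm (x,y) = sqrt (x*x+y*y).
Proof. unfold Cnorm; simpl; f_equal; ring. Qed.

Lemma Cnorm_nonneg z : 0 <= Cnorm z.
Proof. apply sqrt_pos. Qed.

Lemma Cnorm_fst z : Rabs (fst z) <= Cnorm z.
Proof. destruct z as [x y]; rewrite Cnorm_eq; simpl.
  rewrite <- sqrt_Rsqr_abs. apply sqrt_le_1_alt. unfold Rsqr; nra. Qed.
Lemma Cnorm_snd z : Rabs (snd z) <= Cnorm z.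
Proof. destruct z as [x y]; rewrite Cnorm_eq; simpl.
  rewrite <- sqrt_Rsqr_abs. apply sqrt_le_1_alt. unfold Rsqr; nra. Qed.

Lemma Cnorm_le_sum z : Cnorm z <= Rabs (fst z) + Rabs (snd z).
Proof. destruct z as [x y]; rewrite Cnorm_eq; simpl.
  rewrite <- (sqrt_square (Rabs x + Rabs y)) by (split_Rabs; lra).
  apply sqrt_le_1_alt. split_Rabs; nra. Qed.

Lemma Cnorm_mul z w : Cnorm (Cmul z w) = Cnorm z * Cnorm w.
Proof. destruct z as [a b], w as [c d]; unfold Cmul; simpl; rewrite !Cnorm_eq.
  rewrite <- sqrt_mult_alt by nra. f_equal; ring. Qed.

Lemma Cnorm_triangle z w : Cnorm (Cadd z w) <= Cnorm z + Cnorm w.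
Proof. destruct z as [a b], w as [c d]; unfold Cadd; simpl; rewrite !Cnorm_eq.
  set (A := a*a+b*b). set (C := c*c+d*d).
  assert (hA : 0 <= A) by (unfold A; nra). assert (hC : 0 <= C) by (unfold C; nra).
  pose proof (sqrt_sqrt A hA). pose proof (sqrt_sqrt C hC).
  pose proof (sqrt_pos A). pose proof (sqrt_pos C).
  assert (key : a*c+b*d <= sqrt A * sqrt C).
  { destruct (Rle_dec (a*c+b*d) 0). nra.
    assert ((a*c+b*d)*(a*c+b*d) <= (sqrt A * sqrt C)*(sqrt A * sqrt C)).
    { replace ((sqrt A * sqrt C)*(sqrt A * sqrt C)) with ((sqrt A * sqrt A)*(sqrt C * sqrt C)) by ring. rewrite H, H0.
      unfold A, C; pose proof (Rle_0_sqr (a*d-b*c)); unfold Rsqr in *; nra. }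
    apply Rnot_le_lt in n. assert (0 <= sqrt A * sqrt C) by (apply Rmult_le_pos; lra). nra. }
  rewrite <- (sqrt_square (sqrt A + sqrt C)) by lra.
  apply sqrt_le_1_alt. unfold A, C in *; nra. Qed.

Lemma Cnorm_pos z : z <> C0 -> 0 < fst z * fst z + snd z * snd z.
Proof. destruct z as [x y]; simpl; intro H.
  destruct (Req_dec x 0); destruct (Req_dec y 0); subst; try nra.
  exfalso; apply H; reflexivity. Qed.

Definition CVC (u : nat -> Cplx) (l : Cplx) : Prop :=
  Un_cv (fun n => fst (u n)) (fst l) /\ Un_cv (fun n => snd (u n)) (snd l).

Lemma Un_cv_ext (u v : nat -> R) l : (forall n, u n = v n) -> Un_cv u l -> Un_cv v l.
Proof. intros H Hu eps He. destruct (Hu eps He) as [N HN]. exists N; intros n Hn.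
  rewrite <- H; auto. Qed.

Lemma CVC_ext u v l : (forall n, u n = v n) -> CVC u l -> CVC v l.
Proof. intros H [H1 H2]; split; eapply Un_cv_ext; try eassumption; intro n; simpl; rewrite H; auto. Qed.

Lemma Un_cv_const c : Un_cv (fun _ => c) c.
Proof. intros eps He; exists 0%nat; intros; unfold R_dist; rewrite Rminus_diag, Rabs_R0; lra. Qed.

Lemma CVC_const c : CVC (fun _ => c) c.
Proof. split; apply Un_cv_const. Qed.

Lemma CVC_add u v a b : CVC u a -> CVC v b -> CVC (fun n => Cadd (u n) (v n)) (Cadd a b).
Proof. intros [H1 H2] [H3 H4]; split; simpl; apply CV_plus; auto. Qed.

Lemma CVC_opp u a : CVC u a -> CVC (fun n => Copp (u n)) (Copp a).
Proof. intros [H1 H2]; split; simpl; apply CV_opp; auto. Qed.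

Lemma CVC_sub u v a b : CVC u a -> CVC v b -> CVC (fun n => Csub (u n) (v n)) (Csub a b).
Proof. intros; unfold Csub; apply CVC_add; auto; apply CVC_opp; auto. Qed.

Lemma CVC_mul u v a b : CVC u a -> CVC v b -> CVC (fun n => Cmul (u n) (v n)) (Cmul a b).
Proof. intros [H1 H2] [H3 H4]; split; simpl.
  apply CV_minus; apply CV_mult; auto.
  apply CV_plus; apply CV_mult; auto. Qed.

Lemma CVC_pow u a m : CVC u a -> CVC (fun n => Cpow (u n) m) (Cpow a m).
Proof. intro H; induction m; simpl. apply CVC_const. apply CVC_mul; auto. Qed.

Lemma Un_cv_comp (f : R -> R) u l : continuity_pt f l -> Un_cv u l -> Un_cv (fun n => f (u n)) (f l).
Proof. intros; apply continuity_seq; auto. Qed.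

Lemma CVC_exp u a : CVC u a -> CVC (fun n => Cexp (u n)) (Cexp a).
Proof. intros [H1 H2]; split; simpl; apply CV_mult.
  apply (Un_cv_comp exp); auto. apply derivable_continuous_pt, derivable_pt_exp.
  apply (Un_cv_comp cos); auto. apply continuity_cos.
  apply (Un_cv_comp exp); auto. apply derivable_continuous_pt, derivable_pt_exp.
  apply (Un_cv_comp sin); auto. apply continuity_sin. Qed.

Lemma Un_cv_inv u l : l <> 0 -> Un_cv u l -> Un_cv (fun n => / u n) (/ l).
Proof. intros Hl H. apply (Un_cv_comp Rinv); auto.
  apply (continuity_pt_inv (fun x => x)); auto. apply derivable_continuous_pt, derivable_pt_id. Qed.

Lemma CVC_inv u a : a <> C0 -> CVC u a -> CVC (fun n => Cinv (u n)) (Cinv a).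
Proof. intros Ha [H1 H2].
  assert (Hr : fst a ^ 2 + snd a ^ 2 <> 0).
  { destruct a as [x y]; simpl. intro E. apply Ha.
    assert (x = 0) by nra. assert (y = 0) by nra. subst; reflexivity. }
  assert (HR : Un_cv (fun n => fst (u n) ^ 2 + snd (u n) ^ 2) (fst a ^ 2 + snd a ^ 2)).
  { simpl. apply CV_plus; apply CV_mult; auto; apply CV_mult; auto; apply Un_cv_const. }
  split; simpl; unfold Rdiv; apply CV_mult; auto.
  apply (Un_cv_inv _ _ Hr HR).
  apply CV_opp; auto.
  apply (Un_cv_inv _ _ Hr HR). Qed.

Lemma CVC_unique u a b : CVC u a -> CVC u b -> a = b.
Proof. intros [H1 H2] [H3 H4]. destruct a, b; simpl in *.
  f_equal; eapply UL_sequence; eauto. Qed.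

Definition contC (F : Cplx -> Cplx) (z0 : Cplx) : Prop :=
  forall eps, 0 < eps -> exists delta, 0 < delta /\
    forall z, UHP z -> Cnorm (Csub z z0) < delta -> Cnorm (Csub (F z) (F z0)) < eps.

Lemma CVC_small w a : CVC w a -> forall d, 0 < d -> exists N, forall n, (n >= N)%nat -> Cnorm (Csub (w n) a) < d.
Proof. intros [H1 H2] d Hd.
  destruct (H1 (d/2)) as [N1 HN1]; [lra|]. destruct (H2 (d/2)) as [N2 HN2]; [lra|].
  exists (max N1 N2); intros n Hn.
  eapply Rle_lt_trans; [apply Cnorm_le_sum|].
  specialize (HN1 n ltac:(lia)). specialize (HN2 n ltac:(lia)). unfold R_dist in *.
  destruct (w n), a; simpl in *. unfold Rminus in *. lra. Qed.

Lemma small_CVC u l : (forall d, 0 < d -> exists N, forall n, (n >= N)%nat -> Cnorm (Csub (u n) l) < d) -> CVC u l.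
Proof. intros H; split; intros eps He; destruct (H eps He) as [N HN]; exists N; intros n Hn;
  specialize (HN n Hn); unfold R_dist.
  - pose proof (Cnorm_fst (Csub (u n) l)). destruct (u n), l; simpl in *; unfold Rminus; lra.
  - pose proof (Cnorm_snd (Csub (u n) l)). destruct (u n), l; simpl in *; unfold Rminus; lra. Qed.

Lemma seq_cont F z0 w : contC F z0 -> (forall n, UHP (w n)) -> CVC w z0 ->
  CVC (fun n => F (w n)) (F z0).
Proof. intros HF Hw Hc. apply small_CVC. intros d Hd.
  destruct (HF d Hd) as [de [Hde Hf]]. destruct (CVC_small _ _ Hc de Hde) as [N HN].
  exists N; intros n Hn; apply Hf; auto. Qed.

Lemma cont_of_seq F z0 : UHP z0 ->
  (forall w, (forall n, UHP (w n)) -> CVC w z0 -> CVC (fun n => F (w n)) (F z0)) -> contC F z0.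
Proof. intros Hz Hseq eps He. apply NNPP; intro Hn.
  assert (Hex : forall n:nat, exists z, UHP z /\ Cnorm (Csub z z0) < / INR (S n) /\
                 eps <= Cnorm (Csub (F z) (F z0))).
  { intro n. apply NNPP; intro Hn2. apply Hn. exists (/ INR (S n)). split.
    apply Rinv_0_lt_compat, lt_0_INR; lia.
    intros z Hz1 Hd. apply Rnot_le_lt. intro Hle. apply Hn2; exists z; auto. }
  set (w := fun n => proj1_sig (constructive_indefinite_description _ (Hex n))).
  assert (Hw : forall n, UHP (w n) /\ Cnorm (Csub (w n) z0) < / INR (S n) /\
                 eps <= Cnorm (Csub (F (w n)) (F z0))).
  { intro n; unfold w; destruct (constructive_indefinite_description _ (Hex n)); simpl; auto. }
  assert (Hc : CVC w z0).
  { apply small_CVC. intros d Hd. destruct (archimed_cor1 d Hd) as [N [HN1 HN2]].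
    exists N; intros n Hnn. destruct (Hw n) as [_ [H _]]. eapply Rlt_trans; [apply H|].
    eapply Rle_lt_trans; [|apply HN1]. apply Rinv_le_contravar. apply lt_0_INR; auto.
    apply le_INR; lia. }
  assert (Hc2 := Hseq w (fun n => proj1 (Hw n)) Hc).
  destruct (CVC_small _ _ Hc2 eps He) as [N HN].
  specialize (HN N (le_n _)). destruct (Hw N) as [_ [_ H]]. lra. Qed.

Lemma Cdiv_mul_cancel w v : v <> C0 -> Cmul (Cdiv w v) v = w.
Proof. intro Hv. pose proof (Cnorm_pos v Hv). destruct w as [a b], v as [c d]; simpl in *.
  unfold Cdiv, Cmul, Cinv; simpl. f_equal; field; nra. Qed.

Lemma Cnorm_pos' z : z <> C0 -> 0 < Cnorm z.
Proof. intro H. pose proof (Cnorm_pos z H). destruct z as [x y]; rewrite Cnorm_eq.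
  apply sqrt_lt_R0; simpl in *; lra. Qed.

Lemma Csub_diag z : Csub z z = C0.
Proof. destruct z; unfold Csub, Cadd, Copp, C0; simpl; f_equal; ring. Qed.

Lemma Cnorm_C0 : Cnorm C0 = 0.
Proof. unfold C0; rewrite Cnorm_eq. replace (0*0+0*0) with 0 by ring. apply sqrt_0. Qed.

Lemma Csub_neq z a : z <> a -> Csub z a <> C0.
Proof. intros H E; apply H. destruct z, a; unfold Csub, Cadd, Copp, C0 in E; simpl in E.
  injection E; intros; f_equal; lra. Qed.

Lemma diff_contC g a : C_differentiable_at g a -> contC g a.
Proof. intros [l Hl] eps He.
  destruct (Hl 1 Rlt_0_1) as [d1 [Hd1 H1]].
  pose proof (Cnorm_nonneg l).
  exists (Rmin d1 (eps / (Cnorm l + 1))). split.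
  { apply Rmin_glb_lt; auto. apply Rdiv_lt_0_compat; lra. }
  intros z Hz Hd.
  destruct (classic (z = a)) as [E|E].
  { subst. rewrite Csub_diag, Cnorm_C0; auto. }
  pose proof (Csub_neq _ _ E) as Hne. pose proof (Cnorm_pos' _ Hne) as Hpos.
  assert (Hd1' : Cnorm (Csub z a) < d1) by (eapply Rlt_le_trans; [apply Hd|apply Rmin_l]).
  assert (Hd2 : Cnorm (Csub z a) < eps / (Cnorm l + 1)) by (eapply Rlt_le_trans; [apply Hd|apply Rmin_r]).
  specialize (H1 z (conj Hpos Hd1')).
  set (D := Cdiv (Csub (g z) (g a)) (Csub z a)) in *.
  assert (HD : Cnorm D < Cnorm l + 1).
  { replace D with (Cadd (Csub D l) l).
    eapply Rle_lt_trans; [apply Cnorm_triangle|]. lra.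
    destruct D, l; unfold Csub, Cadd, Copp; simpl; f_equal; ring. }
  rewrite <- (Cdiv_mul_cancel (Csub (g z) (g a)) (Csub z a) Hne). fold D.
  rewrite Cnorm_mul.
  apply Rle_lt_trans with ((Cnorm l + 1) * Cnorm (Csub z a)).
  apply Rmult_le_compat_r; lra.
  replace eps with ((Cnorm l + 1) * (eps / (Cnorm l + 1))) by (field; lra).
  apply Rmult_lt_compat_l; lra. Qed.

Definition Cone : Cplx := (1, 0).

Lemma Cring : ring_theory C0 Cone Cadd Cmul Csub Copp (@eq Cplx).
Proof. constructor; intros; repeat match goal with x : Cplx |- _ => destruct x end;
  unfold Csub, C0, Cone, Cadd, Cmul, Copp; simpl; f_equal; ring. Qed.

Lemma Cone_neq_C0 : Cone <> C0.
Proof. unfold Cone, C0; intro H; injection H; lra. Qed.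

Lemma Cfield : field_theory C0 Cone Cadd Cmul Csub Copp Cdiv Cinv (@eq Cplx).
Proof. constructor.
  - exact Cring.
  - exact Cone_neq_C0.
  - intros; reflexivity.
  - intros z Hz. pose proof (Cnorm_pos z Hz). destruct z as [x y]; simpl in *.
    unfold Cmul, Cinv, Cone; simpl. f_equal; field; nra. Qed.

Add Field Cfield_inst : Cfield.

Lemma RtoC_mul x y : RtoC (x * y) = Cmul (RtoC x) (RtoC y).
Proof. unfold RtoC, Cmul; simpl; f_equal; ring. Qed.
Lemma RtoC_add x y : RtoC (x + y) = Cadd (RtoC x) (RtoC y).
Proof. unfold RtoC, Cadd; simpl; f_equal; ring. Qed.
Lemma RtoC_opp x : RtoC (- x) = Copp (RtoC x).
Proof. unfold RtoC, Copp; simpl; f_equal; ring. Qed.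
Lemma RtoC_1 : RtoC 1 = Cone.
Proof. reflexivity. Qed.
Lemma RtoC_0 : RtoC 0 = C0.
Proof. reflexivity. Qed.

Lemma test (a b : Cplx) : b <> C0 -> Cmul (Cdiv a b) b = a.
Proof. intros. field. auto. Qed.

Definition den (M : mat) (z : Cplx) : Cplx := Cadd (Cmul (RtoC (mc M)) z) (RtoC (md M)).
Definition num (M : mat) (z : Cplx) : Cplx := Cadd (Cmul (RtoC (ma M)) z) (RtoC (mb M)).

Lemma mob_eq M z : mob M z = Cdiv (num M z) (den M z).
Proof. reflexivity. Qed.
Lemma mob_deriv_eq M z : mob_deriv M z = Cinv (Cmul (den M z) (den M z)).
Proof. unfold mob_deriv; simpl. f_equal. change (1,0) with Cone. fold (den M z). ring. Qed.

Lemma den_nz M z : mdet M = 1 -> UHP z -> den M z <> C0.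
Proof. destruct M as [a b c d], z as [x y]; unfold mdet, UHP, den, C0, RtoC, Cadd, Cmul; simpl.
  intros Hd Hy E. injection E; intros E1 E2.
  assert (c = 0) by nra. subst. assert (d = 0) by nra. subst. lra. Qed.

Lemma mob_UHP M z : mdet M = 1 -> UHP z -> UHP (mob M z).
Proof. intros Hd Hz. pose proof (den_nz M z Hd Hz) as Hn. pose proof (Cnorm_pos _ Hn) as Hp.
  revert Hd Hz Hp. destruct M as [a b c d], z as [x y];
  unfold mdet, UHP, den, mob, Cdiv, Cinv, C0, RtoC, Cadd, Cmul; simpl. intros Hd Hz Hp.
  match goal with |- 0 < ?G => replace G with (y * (a * d - b * c) /
    ((c * x - 0 * y + d) * (c * x - 0 * y + d) + (c * y + 0 * x + 0) * (c * y + 0 * x + 0))) by (field; lra) end.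
  rewrite Hd. apply Rdiv_lt_0_compat; lra. Qed.

Lemma den_mmul g M z : den M z <> C0 -> den (mmul g M) z = Cmul (den g (mob M z)) (den M z).
Proof. intro H. rewrite mob_eq. revert H. unfold den, num, mmul; simpl.
  rewrite !RtoC_add, !RtoC_mul. intro H. field. auto. Qed.

Lemma det_mmul g h : mdet (mmul g h) = mdet g * mdet h.
Proof. destruct g, h; unfold mdet, mmul; simpl; ring. Qed.
Lemma det_minv g : mdet (minv g) = mdet g.
Proof. destruct g; unfold mdet, minv; simpl; ring. Qed.
Lemma det_mneg g : mdet (mneg g) = mdet g.
Proof. destruct g; unfold mdet, mneg; simpl; ring. Qed.

Lemma deriv_mmul g M z : mdet g = 1 -> mdet M = 1 -> UHP z ->
  mob_deriv (mmul g M) z = Cmul (mob_deriv g (mob M z)) (mob_deriv M z).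
Proof. intros Hg HM Hz. rewrite !mob_deriv_eq.
  pose proof (den_nz M z HM Hz). pose proof (den_nz g _ Hg (mob_UHP M z HM Hz)).
  rewrite den_mmul by auto. field. auto. Qed.

Lemma Cexp_add x y : Cexp (Cadd x y) = Cmul (Cexp x) (Cexp y).
Proof. destruct x, y; unfold Cexp, Cadd, Cmul; simpl. rewrite exp_plus, cos_plus, sin_plus.
  f_equal; ring. Qed.

Lemma Cexp_nz x : Cexp x <> C0.
Proof. destruct x as [a b]; unfold Cexp, C0; intro E; injection E; intros E1 E2.
  pose proof (exp_pos a). pose proof (sin2_cos2 b). unfold Rsqr in *.
  assert (cos b = 0) by (apply (Rmult_eq_reg_l (exp a)); lra).
  assert (sin b = 0) by (apply (Rmult_eq_reg_l (exp a)); lra). nra. Qed.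

Lemma Cexp_C0 : Cexp C0 = Cone.
Proof. unfold Cexp, C0, Cone; simpl. rewrite exp_0, cos_0, sin_0. f_equal; ring. Qed.

Lemma Cinv_unique a b : Cmul a b = Cone -> b <> C0 -> a = Cinv b.
Proof. intros H Hb. transitivity (Cmul (Cmul a b) (Cinv b)). field; auto. rewrite H. field; auto. Qed.

Lemma Cexp_opp x : Cexp (Copp x) = Cinv (Cexp x).
Proof. apply Cinv_unique. rewrite <- Cexp_add. replace (Cadd (Copp x) x) with C0 by ring.
  apply Cexp_C0. apply Cexp_nz. Qed.

Lemma mmul_minv g : mdet g = 1 -> mmul g (minv g) = mid.
Proof. destruct g as [a b c d]; unfold mdet, mmul, minv, mid; simpl; intro H.
  f_equal; lra. Qed.

Lemma den_mid z : den mid z = Cone.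
Proof. unfold den, mid; simpl. rewrite RtoC_0, RtoC_1. ring. Qed.

Lemma deriv_minv g z : mdet g = 1 -> UHP z ->
  mob_deriv (minv g) z = Cinv (mob_deriv g (mob (minv g) z)).
Proof. intros Hg Hz. assert (Hi : mdet (minv g) = 1) by (rewrite det_minv; auto).
  pose proof (den_nz _ z Hi Hz) as H1.
  pose proof (den_mmul g (minv g) z H1) as E. rewrite mmul_minv, den_mid in E by auto.
  assert (E2 : den g (mob (minv g) z) = Cinv (den (minv g) z)).
  { apply Cinv_unique; auto. }
  rewrite !mob_deriv_eq, E2. field. split; [auto| exact Cone_neq_C0]. Qed.

Lemma seqC_mob M z0 w : mdet M = 1 -> UHP z0 -> CVC w z0 ->
  CVC (fun n => mob M (w n)) (mob M z0).
Proof. intros HM Hz Hc. unfold mob, Cdiv. apply CVC_mul.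
  - apply CVC_add; [apply CVC_mul; [apply CVC_const|auto]|apply CVC_const].
  - apply CVC_inv. exact (den_nz M z0 HM Hz).
    apply CVC_add; [apply CVC_mul; [apply CVC_const|auto]|apply CVC_const]. Qed.

Lemma contH_of_seq F : (forall z0, UHP z0 -> forall w, (forall n, UHP (w n)) -> CVC w z0 ->
  CVC (fun n => F (w n)) (F z0)) -> continuous_on_H F.
Proof. intros H z0 Hz0. apply (cont_of_seq F z0 Hz0). auto. Qed.

Lemma seq_contH F z0 w : continuous_on_H F -> UHP z0 -> (forall n, UHP (w n)) -> CVC w z0 ->
  CVC (fun n => F (w n)) (F z0).
Proof. intros HF Hz Hw Hc. apply seq_cont; auto. exact (HF z0 Hz). Qed.

Lemma is_lift_tmul g h : is_lift g -> is_lift h -> is_lift (tmul g h).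
Proof. intros [Dg [Cg Eg]] [Dh [Ch Eh]]. unfold is_lift, tmul; simpl. split; [|split].
  - rewrite det_mmul, Dg, Dh; ring.
  - apply contH_of_seq. intros z0 Hz0 w Hw Hc. apply CVC_add.
    + apply (seq_contH (tlog g) (mob (tmat h) z0) (fun n => mob (tmat h) (w n))); auto.
      apply mob_UHP; auto. intro n; apply mob_UHP; auto. apply seqC_mob; auto.
    + apply seq_contH; auto.
  - intros z Hz. rewrite Cexp_add, Eg, Eh by (auto; apply mob_UHP; auto).
    symmetry; apply deriv_mmul; auto. Qed.

Lemma is_lift_tinv g : is_lift g -> is_lift (tinv g).
Proof. intros [Dg [Cg Eg]]. assert (Di : mdet (minv (tmat g)) = 1) by (rewrite det_minv; auto).
  unfold is_lift, tinv; simpl. split; [|split]; auto.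
  - apply contH_of_seq. intros z0 Hz0 w Hw Hc. apply CVC_opp.
    apply (seq_contH (tlog g) (mob (minv (tmat g)) z0) (fun n => mob (minv (tmat g)) (w n))); auto.
    apply mob_UHP; auto. intro n; apply mob_UHP; auto. apply seqC_mob; auto.
  - intros z Hz. rewrite Cexp_opp, Eg by (apply mob_UHP; auto).
    symmetry; apply deriv_minv; auto. Qed.

Lemma is_lift_tid : is_lift tid.
Proof. unfold is_lift, tid; simpl. split; [|split].
  - unfold mdet, mid; simpl; ring.
  - apply contH_of_seq. intros; apply CVC_const.
  - intros z Hz. rewrite Cexp_C0, mob_deriv_eq, den_mid. field. exact Cone_neq_C0. Qed.

Lemma Cpow_mul x y n : Cpow (Cmul x y) n = Cmul (Cpow x n) (Cpow y n).
Proof. induction n; simpl. change (Cone = Cmul Cone Cone); ring. rewrite IHn; ring. Qed.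

Lemma Cpow_nz x n : x <> C0 -> Cpow x n <> C0.
Proof. intro H; induction n; simpl. exact Cone_neq_C0.
  intro E. assert (Cmul (Cinv x) (Cmul x (Cpow x n)) = C0) by (rewrite E; ring).
  apply IHn. rewrite <- H0. field; auto. Qed.

Lemma Cmul_cancel c x y : c <> C0 -> Cmul c x = Cmul c y -> x = y.
Proof. intros Hc E. transitivity (Cmul (Cinv c) (Cmul c x)). field; auto.
  rewrite E; field; auto. Qed.

Lemma mob_fix_identity M a lam z : mdet M = 1 -> num M a = Cmul a lam -> den M a = lam ->
  den M z <> C0 -> Cmul (Csub (mob M z) a) (Cmul lam (den M z)) = Csub z a.
Proof. intros Hdet HB HD Hz. rewrite mob_eq. revert HB HD Hz. unfold num, den.
  assert (Hd : Csub (Cmul (RtoC (ma M)) (RtoC (md M))) (Cmul (RtoC (mb M)) (RtoC (mc M))) = Cone).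
  { rewrite <- !RtoC_mul. unfold Csub. rewrite <- RtoC_opp, <- RtoC_add. change (RtoC (mdet M) = Cone). rewrite Hdet. reflexivity. }
  revert Hd.
  generalize (RtoC (ma M)) (RtoC (mb M)) (RtoC (mc M)) (RtoC (md M)). intros A B C D Hd HB HD Hz.
  transitivity (Cmul (Csub (Cadd (Cmul A z) B) (Cmul a (Cadd (Cmul C z) D))) lam).
  field; auto.
  assert (HB' : B = Csub (Cmul a lam) (Cmul A a)) by (rewrite <- HB; ring).
  assert (HD' : D = Csub lam (Cmul C a)) by (rewrite <- HD; ring).
  transitivity (Cmul (Csub z a) (Csub (Cmul A D) (Cmul B C))).
  rewrite HB', HD'; ring. rewrite Hd; ring. Qed.

Definition zseq (a : Cplx) (j : nat) : Cplx := Cadd a (0, / INR (S j)).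

Lemma zseq_UHP a j : UHP a -> UHP (zseq a j).
Proof. unfold UHP, zseq, Cadd; cbn [fst snd]. intro. pose proof (Rinv_0_lt_compat (INR (S j)) (lt_0_INR _ (Nat.lt_0_succ j))). lra. Qed.

Lemma zseq_neq a j : zseq a j <> a.
Proof. unfold zseq, Cadd; destruct a as [x y]; cbn [fst snd]. intro E; apply (f_equal snd) in E; cbn [snd] in E.
  pose proof (Rinv_0_lt_compat (INR (S j)) (lt_0_INR _ (Nat.lt_0_succ j))). lra. Qed.

Lemma zseq_CVC a : CVC (zseq a) a.
Proof. unfold zseq.
  assert (H0 : CVC (fun j => (0, / INR (S j))) (0, 0)).
  { split; cbn [fst snd]. apply Un_cv_const.
  intros eps He. destruct (archimed_cor1 eps He) as [N [HN1 HN2]]. exists N; intros n Hn.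
  unfold R_dist. rewrite Rminus_0_r. rewrite Rabs_right.
  eapply Rle_lt_trans; [|apply HN1]. apply Rinv_le_contravar. apply lt_0_INR; auto.
  apply le_INR; lia. left; apply Rinv_0_lt_compat, lt_0_INR; lia. }
  pose proof (CVC_add (fun _ => a) _ a (0,0) (CVC_const a) H0) as H1.
  replace (Cadd a (0,0)) with a in H1 by (destruct a; unfold Cadd; simpl; f_equal; ring). exact H1. Qed.

Lemma local_main (M : mat) (L : Cplx -> Cplx) (a lam ch : Cplx) (k : R) (f g : Cplx -> Cplx) (n : nat) :
  mdet M = 1 -> UHP a -> num M a = Cmul a lam -> den M a = lam ->
  continuous_on_H L -> holomorphic_on_H g -> g a <> C0 ->
  (forall z, UHP z -> f z = Cmul (Cpow (Csub z a) n) (g z)) ->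
  (forall z, UHP z -> Cmul (f (mob M z)) (Cexp (Cmul (RtoC k) (L z))) = Cmul ch (f z)) ->
  Cexp (Cmul (RtoC k) (L a)) = Cmul ch (Cpow (Cmul lam lam) n).
Proof. intros Hdet Ha HB HD HL Hg Hga Hf Haut.
  assert (Hlam : lam <> C0) by (rewrite <- HD; apply den_nz; auto).
  assert (Hfix : mob M a = a) by (rewrite mob_eq, HB, HD; field; auto).
  assert (Step : forall z, UHP z -> z <> a ->
    Cmul (g (mob M z)) (Cexp (Cmul (RtoC k) (L z))) =
    Cmul ch (Cmul (g z) (Cpow (Cmul lam (den M z)) n))).
  { intros z Hz Hza. pose proof (Haut z Hz) as E.
    rewrite (Hf _ (mob_UHP M z Hdet Hz)), (Hf z Hz) in E.
    assert (Hdz := den_nz M z Hdet Hz).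
    pose proof (mob_fix_identity M a lam z Hdet HB HD Hdz) as Id.
    apply (Cmul_cancel (Cpow (Csub z a) n)). apply Cpow_nz, Csub_neq; auto.
    rewrite <- Id at 1. rewrite Cpow_mul.
    transitivity (Cmul (Cpow (Cmul lam (den M z)) n)
       (Cmul (Cmul (Cpow (Csub (mob M z) a) n) (g (mob M z))) (Cexp (Cmul (RtoC k) (L z))))).
    ring. rewrite E. ring. }
  set (w := zseq a).
  assert (Hw : forall j, UHP (w j)) by (intro; apply zseq_UHP; auto).
  assert (Hc : CVC w a) by apply zseq_CVC.
  assert (Hgc : contC g a) by (apply diff_contC; apply Hg; auto).
  assert (C1 : CVC (fun j => Cmul (g (mob M (w j))) (Cexp (Cmul (RtoC k) (L (w j)))))
                   (Cmul (g a) (Cexp (Cmul (RtoC k) (L a))))).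
  { apply CVC_mul.
    - rewrite <- Hfix. rewrite <- Hfix in Hgc.
      apply seq_cont; auto. intro j; apply mob_UHP; auto.
      apply seqC_mob; auto.
    - apply CVC_exp, CVC_mul. apply CVC_const. apply seq_contH; auto. }
  assert (C2 : CVC (fun j => Cmul (g (mob M (w j))) (Cexp (Cmul (RtoC k) (L (w j)))))
                   (Cmul ch (Cmul (g a) (Cpow (Cmul lam (den M a)) n)))).
  { eapply CVC_ext. intro j; symmetry; apply Step; auto. apply zseq_neq.
    apply CVC_mul. apply CVC_const. apply CVC_mul. apply seq_cont; auto.
    apply CVC_pow, CVC_mul. apply CVC_const. unfold den.
    apply CVC_add; [apply CVC_mul; [apply CVC_const|auto]|apply CVC_const]. }
  pose proof (CVC_unique _ _ _ C1 C2) as U. rewrite HD in U.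
  apply (Cmul_cancel (g a)); auto. rewrite U. ring. Qed.

Definition fixes (M : mat) (a lam : Cplx) : Prop :=
  num M a = Cmul a lam /\ den M a = lam /\ lam <> C0.

Lemma num_mmul g M z : den M z <> C0 -> num (mmul g M) z = Cmul (num g (mob M z)) (den M z).
Proof. intro H. rewrite mob_eq. revert H. unfold den, num, mmul; simpl.
  rewrite !RtoC_add, !RtoC_mul. intro H. field. auto. Qed.

Lemma fixes_mob M a lam : fixes M a lam -> mob M a = a.
Proof. intros [H1 [H2 H3]]. rewrite mob_eq, H1, H2. field; auto. Qed.

Lemma fixes_mid a : fixes mid a Cone.
Proof. unfold fixes, num, den, mid; simpl. rewrite RtoC_0, RtoC_1. split; [ring|split; [ring|exact Cone_neq_C0]]. Qed.

Lemma fixes_mmul g h a l1 l2 : fixes g a l1 -> fixes h a l2 -> fixes (mmul g h) a (Cmul l1 l2).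
Proof. intros Hg Hh. pose proof (fixes_mob _ _ _ Hh) as Eh. destruct Hg as [G1 [G2 G3]], Hh as [H1 [H2 H3]].
  assert (Hd : den h a <> C0) by (rewrite H2; auto).
  unfold fixes. rewrite num_mmul, den_mmul, Eh, G1, G2, H2 by auto. split; [ring|split; [ring|]].
  intro E. assert (Cmul (Cinv l1) (Cmul (Cinv l2) (Cmul l1 l2)) = C0) by (rewrite E; ring).
  apply Cone_neq_C0. rewrite <- H. field; auto. Qed.

Lemma fixes_mneg M a lam : fixes M a lam -> fixes (mneg M) a (Copp lam).
Proof. intros [H1 [H2 H3]]. unfold fixes. revert H1 H2. unfold num, den, mneg; simpl.
  rewrite !RtoC_opp. intros H1 H2. split; [|split].
  transitivity (Copp (Cadd (Cmul (RtoC (ma M)) a) (RtoC (mb M)))). ring. rewrite H1; ring.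
  transitivity (Copp (Cadd (Cmul (RtoC (mc M)) a) (RtoC (md M)))). ring. rewrite H2; ring.
  intro E. apply H3. transitivity (Copp (Copp lam)). ring. rewrite E. ring. Qed.

Definition Cscale (r : R) (z : Cplx) : Cplx := (r * fst z, r * snd z).

Lemma tpow_fix g a lam m : fixes (tmat g) a lam ->
  fixes (tmat (tpow g m)) a (Cpow lam m) /\ tlog (tpow g m) a = Cscale (INR m) (tlog g a).
Proof. intro Hf. induction m.
  - simpl. split. apply fixes_mid. unfold Cscale, C0; simpl; f_equal; ring.
  - destruct IHm as [IH1 IH2]. split.
    + simpl. apply fixes_mmul; auto.
    + simpl tpow. unfold tmul; cbn [tlog tmat]. rewrite (fixes_mob _ _ _ IH1), IH2.
      rewrite S_INR. destruct (tlog g a); unfold Cscale, Cadd; simpl; f_equal; ring. Qed.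

Lemma log_at_fix g a lam m : (0 < m)%nat -> UHP a -> fixes (tmat g) a lam -> teq (tpow g m) tc ->
  tlog g a = (0, 2 * PI / INR m).
Proof. intros Hm Ha Hf [_ Ht]. specialize (Ht a Ha). destruct (tpow_fix g a lam m Hf) as [_ E].
  rewrite E in Ht. unfold tc in Ht; cbn [tlog] in Ht. assert (INR m <> 0) by (apply not_0_INR; lia).
  destruct (tlog g a) as [x y]; unfold Cscale in Ht; simpl in Ht.
  injection Ht; intros E1 E2. f_equal.
  apply (Rmult_eq_reg_l (INR m)); auto; lra.
  apply (Rmult_eq_reg_l (INR m)); auto. rewrite E1. field; auto. Qed.

Definition cis (t : R) : Cplx := (cos t, sin t).

Lemma cis_mul s t : Cmul (cis s) (cis t) = cis (s + t).
Proof. unfold cis, Cmul; simpl. rewrite cos_plus, sin_plus. f_equal; ring. Qed.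

Lemma cis_pow t m : Cpow (cis t) m = cis (INR m * t).
Proof. induction m. simpl. unfold cis. rewrite Rmult_0_l, cos_0, sin_0. reflexivity.
  simpl Cpow. rewrite IHm, cis_mul, S_INR. f_equal. ring. Qed.

Lemma cis_0 : cis 0 = Cone.
Proof. unfold cis, Cone. rewrite cos_0, sin_0. reflexivity. Qed.

Lemma e2pii_cis x : e2pii x = cis (2 * PI * x).
Proof. unfold e2pii, Cexp, cis; simpl. rewrite exp_0. f_equal; ring. Qed.

Lemma cis_eq s t : s = t -> cis s = cis t.
Proof. intros ->; reflexivity. Qed.

Lemma chi_gen (g : tilde) (m : nat) (pt lam ch : Cplx) (k : R) (f : Cplx -> Cplx) (n : nat) :
  (0 < m)%nat -> is_lift g -> teq (tpow g m) tc -> fixes (tmat g) pt lam ->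
  Cmul lam lam = cis (- (2 * PI / INR m)) -> UHP pt ->
  (exists h, holomorphic_on_H h /\ h pt <> C0 /\ forall z, UHP z -> f z = Cmul (Cpow (Csub z pt) n) (h z)) ->
  (forall z, UHP z -> Cmul (f (mob (tmat g) z)) (Cexp (Cmul (RtoC k) (tlog g z))) = Cmul ch (f z)) ->
  ch = cis (2 * PI * ((k + INR n) / INR m)).
Proof. intros Hm [Hdet [Hc He]] Ht Hfx Hl Hpt [h [Hh [Hh0 Hfh]]] Haut.
  destruct Hfx as [F1 [F2 F3]].
  pose proof (local_main (tmat g) (tlog g) pt lam ch k f h n Hdet Hpt F1 F2 Hc Hh Hh0 Hfh Haut) as E.
  rewrite (log_at_fix g pt lam m Hm Hpt (conj F1 (conj F2 F3)) Ht) in E.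
  rewrite Hl, cis_pow in E.
  replace (Cexp (Cmul (RtoC k) (0, 2 * PI / INR m))) with (cis (k * (2 * PI / INR m))) in E
    by (unfold Cexp, cis, Cmul, RtoC; simpl;
        replace (k * 0 - 0 * (2 * PI / INR m)) with 0 by ring;
        replace (k * (2 * PI / INR m) + 0 * 0) with (k * (2 * PI / INR m)) by ring; rewrite exp_0;
        f_equal; ring).
  assert (INR m <> 0) by (apply not_0_INR; lia).
  transitivity (Cmul ch (Cmul (cis (INR n * - (2 * PI / INR m))) (cis (INR n * (2 * PI / INR m))))).
  rewrite cis_mul. replace (INR n * - (2 * PI / INR m) + INR n * (2 * PI / INR m)) with 0 by ring.
  rewrite cis_0; ring.
  replace (Cmul ch (Cmul (cis (INR n * - (2 * PI / INR m))) (cis (INR n * (2 * PI / INR m)))))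
    with (Cmul (Cmul ch (cis (INR n * - (2 * PI / INR m)))) (cis (INR n * (2 * PI / INR m)))) by ring.
  rewrite <- E, cis_mul. apply cis_eq. field; auto. Qed.

Lemma mmul_mid_r M : mmul M mid = M.
Proof. destruct M; unfold mmul, mid; simpl; f_equal; ring. Qed.
Lemma mmul_mid_l M : mmul mid M = M.
Proof. destruct M; unfold mmul, mid; simpl; f_equal; ring. Qed.
Lemma mmul_mneg_l G N : mmul (mneg G) N = mneg (mmul G N).
Proof. destruct G, N; unfold mmul, mneg; simpl; f_equal; ring. Qed.
Lemma minv_mneg G : minv (mneg G) = mneg (minv G).
Proof. destruct G; unfold minv, mneg; simpl; f_equal; ring. Qed.

Definition gen (p q : nat) (M : mat) : Prop := forall N, in_Gamma p q N -> in_Gamma p q (mmul M N).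

Lemma gen_neg p q M : gen p q M -> gen p q (mneg M).
Proof. intros H N HN. rewrite mmul_mneg_l. apply G_neg, H, HN. Qed.

Lemma gen_in p q M : gen p q M -> in_Gamma p q M.
Proof. intro H. rewrite <- mmul_mid_r. apply H, G_id. Qed.

Lemma in_tGamma_pow p q g m : is_lift g -> gen p q (tmat g) -> in_tGamma p q (tpow g m).
Proof. intros Hl Hg. induction m; simpl.
  - split. apply is_lift_tid. apply G_id.
  - destruct IHm as [I1 I2]. split. apply is_lift_tmul; auto. apply Hg; auto. Qed.

Lemma Cnorm_nz z : Cnorm z = 1 -> z <> C0.
Proof. intros H E; subst. rewrite Cnorm_C0 in H. lra. Qed.

Lemma chi_tid p q chi : is_character p q chi -> chi tid = Cone.
Proof. intros [Ht [Hm Hn]].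
  assert (I : in_tGamma p q tid) by (split; [apply is_lift_tid|apply G_id]).
  assert (I2 : in_tGamma p q (tmul tid tid)).
  { split. apply is_lift_tmul; apply is_lift_tid. unfold tmul, tid; simpl. rewrite mmul_mid_l. apply G_id. }
  assert (E : chi (tmul tid tid) = chi tid).
  { apply Ht; auto. split. left; unfold tmul, tid; simpl; apply mmul_mid_l.
    intros z _; unfold tmul, tid; simpl. unfold Cadd, C0; simpl; f_equal; ring. }
  rewrite Hm in E by auto. pose proof (Cnorm_nz _ (Hn _ I)) as Hz.
  apply (Cmul_cancel (chi tid)); auto. rewrite E. ring. Qed.

Lemma chi_pow p q chi g m : is_character p q chi -> is_lift g -> gen p q (tmat g) ->
  chi (tpow g m) = Cpow (chi g) m.
Proof. intros Hc Hl Hg. induction m; simpl.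
  - apply (chi_tid p q chi Hc).
  - destruct Hc as [Ht [Hm Hn]]. rewrite Hm, IHm. reflexivity.
    split; auto. apply gen_in; auto. apply in_tGamma_pow; auto. Qed.

Lemma chi_inv p q chi g : is_character p q chi -> is_lift g -> gen p q (tmat g) -> gen p q (minv (tmat g)) ->
  chi (tinv g) = Cinv (chi g).
Proof. intros Hc Hl Hg Hgi. pose proof (chi_tid p q chi Hc) as E1.
  destruct Hc as [Ht [Hm Hn]]. destruct Hl as [Hd Hl'].
  assert (Ig : in_tGamma p q g) by (split; [split; auto|apply gen_in; auto]).
  assert (Ii : in_tGamma p q (tinv g)) by (split; [apply is_lift_tinv; split; auto|apply gen_in; auto]).
  assert (Ip : in_tGamma p q (tmul g (tinv g))).
  { split. apply is_lift_tmul; auto. split; auto. apply is_lift_tinv; split; auto.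
    unfold tmul, tinv; simpl. rewrite mmul_minv by auto. apply G_id. }
  assert (It : in_tGamma p q tid) by (split; [apply is_lift_tid|apply G_id]).
  assert (E : chi (tmul g (tinv g)) = chi tid).
  { apply Ht; auto. split. left; unfold tmul, tinv, tid; simpl; apply mmul_minv; auto.
    intros z _; unfold tmul, tinv, tid; simpl. unfold Cadd, Copp, C0; simpl; f_equal; ring. }
  rewrite Hm, E1 in E by auto.
  apply Cinv_unique. rewrite <- E. ring. apply Cnorm_nz, Hn, Ig. Qed.

Lemma cis_inv t : Cinv (cis t) = cis (- t).
Proof. symmetry. apply Cinv_unique. rewrite cis_mul. replace (-t + t) with 0 by ring. apply cis_0.
  apply Cnorm_nz. unfold cis. rewrite Cnorm_eq. rewrite <- (sin2_cos2 t). unfold Rsqr.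
  replace (cos t * cos t + sin t * sin t) with (sin t * sin t + cos t * cos t) by ring.
  apply sqrt_1 || (rewrite sin2_cos2; apply sqrt_1) || idtac.
  pose proof (sin2_cos2 t); unfold Rsqr in *. rewrite H. apply sqrt_1. Qed.

Lemma chi_zpow p q chi g u z : is_character p q chi -> is_lift g -> gen p q (tmat g) ->
  gen p q (minv (tmat g)) -> chi g = cis (2 * PI * u) ->
  in_tGamma p q (tzpow g z) /\ chi (tzpow g z) = cis (2 * PI * u * IZR z).
Proof. intros Hc Hl Hg Hgi Hu. destruct z as [|k|k]; simpl tzpow.
  - split. split; [apply is_lift_tid|apply G_id]. rewrite (chi_tid p q chi Hc). rewrite Rmult_0_r. symmetry; apply cis_0.
  - split. apply in_tGamma_pow; auto.
    rewrite (chi_pow p q chi g _ Hc Hl Hg), Hu, cis_pow. apply cis_eq.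
    rewrite INR_IZR_INZ, positive_nat_Z. ring.
  - assert (Hli : is_lift (tinv g)) by (apply is_lift_tinv; auto).
    split. apply in_tGamma_pow; auto.
    rewrite (chi_pow p q chi (tinv g) _ Hc Hli Hgi), (chi_inv p q chi g Hc Hl Hg Hgi), Hu, cis_inv, cis_pow.
    apply cis_eq. replace (Z.neg k) with (- Z.pos k)%Z by reflexivity.
    rewrite opp_IZR, INR_IZR_INZ, positive_nat_Z. ring. Qed.

Lemma angle_facts (p : nat) : (2 <= p)%nat ->
  0 < sin (PI / INR p) /\ sin (PI / INR p) ^ 2 + cos (PI / INR p) ^ 2 = 1.
Proof. intro Hp. split.
  - apply sin_gt_0. apply Rdiv_lt_0_compat. apply PI_RGT_0. apply lt_0_INR; lia.
    assert (H2 : 2 <= INR p) by (replace 2 with (INR 2) by (simpl; ring); apply le_INR; auto).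
    pose proof PI_RGT_0. apply Rmult_lt_reg_r with (INR p). lra.
    unfold Rdiv; rewrite Rmult_assoc, Rinv_l by lra. nra.
  - pose proof (sin2_cos2 (PI / INR p)). unfold Rsqr in H. simpl. lra. Qed.

Lemma sq_cis (c s : R) (t : R) : c = cos t -> s = sin t ->
  Cmul (c, - s) (c, - s) = cis (- (2 * t)).
Proof. intros -> ->. unfold cis, Cmul; simpl. rewrite cos_neg, sin_neg, cos_2a, sin_2a. f_equal; ring. Qed.

Lemma fixes_a p : (2 <= p)%nat -> fixes (alpha0_mat p) (pt_a p) (Copp (pt_a p)).
Proof. intro Hp. destruct (angle_facts p Hp) as [Hs H1].
  unfold fixes, num, den, alpha0_mat, pt_a, Copp, Cmul, Cadd, RtoC, C0; simpl in *.
  split; [|split]. f_equal; nra. f_equal; ring. intro E; injection E; intros. lra. Qed.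

Lemma sq_a p : Cmul (Copp (pt_a p)) (Copp (pt_a p)) = cis (- (2 * PI / INR p)).
Proof. replace (- (2 * PI / INR p)) with (- (2 * (PI / INR p))) by (unfold Rdiv; ring).
  rewrite <- (sq_cis (cos (PI / INR p)) (sin (PI / INR p))) by auto.
  unfold pt_a, Copp, Cmul; simpl; f_equal; ring. Qed.

Lemma fixes_b q : (2 <= q)%nat -> fixes (beta0_mat q) (pt_b q) (cos (PI / INR q), - sin (PI / INR q)).
Proof. intro Hq. destruct (angle_facts q Hq) as [Hs H1].
  unfold fixes, num, den, beta0_mat, pt_b, Copp, Cmul, Cadd, RtoC, C0; simpl in *.
  split; [|split]. f_equal; nra. f_equal; ring. intro E; injection E; intros. lra. Qed.

Lemma sq_b q : Cmul (cos (PI / INR q), - sin (PI / INR q)) (cos (PI / INR q), - sin (PI / INR q))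
  = cis (- (2 * PI / INR q)).
Proof. replace (- (2 * PI / INR q)) with (- (2 * (PI / INR q))) by (unfold Rdiv; ring).
  apply sq_cis; auto. Qed.

Lemma UHP_a p : (2 <= p)%nat -> UHP (pt_a p).
Proof. intro Hp; unfold UHP, pt_a; simpl; apply angle_facts; auto. Qed.
Lemma UHP_b p : (2 <= p)%nat -> UHP (pt_b p).
Proof. intro Hp; unfold UHP, pt_b; simpl; apply angle_facts; auto. Qed.

Lemma aut_simpl p q chi k f g : chi_automorphic p q chi k f -> in_tGamma p q g ->
  forall z, UHP z -> Cmul (f (mob (tmat g) z)) (Cexp (Cmul (RtoC (Q2R k)) (tlog g z))) = Cmul (chi g) (f z).
Proof. intros [_ [Haut _]] Hg z Hz. specialize (Haut g Hg z C0 Hz). unfold omega in Haut.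
  replace (Cadd (tlog g z) C0) with (tlog g z) in Haut by ring.
  replace (Cmul (RtoC (Q2R k)) C0) with C0 in Haut by ring. rewrite Cexp_C0 in Haut.
  rewrite Haut. ring. Qed.

Lemma chi_gen2 (p q : nat) (g : tilde) (m : nat) (M : mat) (pt lam : Cplx) chi k f n :
  (0 < m)%nat -> is_lift g -> (tmat g = M \/ tmat g = mneg M) -> teq (tpow g m) tc ->
  fixes M pt lam -> Cmul lam lam = cis (- (2 * PI / INR m)) -> UHP pt ->
  vanishing_order f pt n -> chi_automorphic p q chi k f -> in_tGamma p q g ->
  chi g = cis (2 * PI * ((Q2R k + INR n) / INR m)).
Proof. intros Hm Hl HM Ht Hfx Hsq Hpt Hv Hf Hg.
  destruct HM as [HM|HM].
  - apply (chi_gen g m pt lam (chi g) (Q2R k) f n); auto. rewrite HM; auto.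
    apply (aut_simpl p q); auto.
  - apply (chi_gen g m pt (Copp lam) (chi g) (Q2R k) f n); auto. rewrite HM; apply fixes_mneg; auto.
    rewrite <- Hsq; ring. apply (aut_simpl p q); auto. Qed.

Lemma gen_pm p q M g : (tmat g = M \/ tmat g = mneg M) -> gen p q M -> gen p q (minv M) ->
  gen p q (tmat g) /\ gen p q (minv (tmat g)).
Proof. intros [H|H] H1 H2; rewrite H; auto. rewrite minv_mneg. split; apply gen_neg; auto. Qed.

Theorem mainTheorem10 (p q : nat) (p1 q1 : Z)
  (Hp : (2 <= p)%nat) (Hpq : (p < q)%nat) (Hcop : Nat.gcd p q = 1%nat)
  (Hbez : (Z.of_nat p * p1 + Z.of_nat q * q1 = 1)%Z)
  (alpha beta : tilde) (Ha : is_alpha p alpha) (Hb : is_beta q beta)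
  (chi : tilde -> Cplx) (Hchi : is_character p q chi)
  (k : Q) (f : Cplx -> Cplx) (Hf : chi_automorphic p q chi k f)
  (Hnz : exists z, UHP z /\ f z <> C0)
  (na nb : nat) (Hna : vanishing_order f (pt_a p) na)
  (Hnb : vanishing_order f (pt_b q) nb) :
  chi alpha = e2pii ((Q2R k + INR na) / INR p) /\
  chi beta = e2pii ((Q2R k + INR nb) / INR q) /\
  chi (tmul (tzpow alpha q1) (tzpow beta p1)) =
    Cmul (e2pii (Q2R k / (INR p * INR q)))
         (e2pii (IZR (Z.of_nat q * q1 * Z.of_nat na + Z.of_nat p * p1 * Z.of_nat nb)%Z
                 / (INR p * INR q))).
Proof.
  assert (Hq : (2 <= q)%nat) by lia.
  destruct Ha as [HLa [HMa HTa]]. destruct Hb as [HLb [HMb HTb]].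
  destruct (gen_pm p q _ alpha HMa (fun N H => G_a p q N H) (fun N H => G_ai p q N H)) as [Ga Gai].
  destruct (gen_pm p q _ beta HMb (fun N H => G_b p q N H) (fun N H => G_bi p q N H)) as [Gb Gbi].
  assert (Ia : in_tGamma p q alpha) by (split; auto; apply gen_in; auto).
  assert (Ib : in_tGamma p q beta) by (split; auto; apply gen_in; auto).
  assert (CA : chi alpha = cis (2 * PI * ((Q2R k + INR na) / INR p))).
  { apply (chi_gen2 p q alpha p (alpha0_mat p) (pt_a p) (Copp (pt_a p)) chi k f na); auto.
    lia. apply fixes_a; auto. apply sq_a. apply UHP_a; auto. }
  assert (CB : chi beta = cis (2 * PI * ((Q2R k + INR nb) / INR q))).
  { apply (chi_gen2 p q beta q (beta0_mat q) (pt_b q) (cos (PI / INR q), - sin (PI / INR q)) chi k f nb); auto.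
    lia. apply fixes_b; auto. apply sq_b. apply UHP_b; auto. }
  split; [rewrite e2pii_cis; auto|split; [rewrite e2pii_cis; auto|]].
  destruct (chi_zpow p q chi alpha _ q1 Hchi HLa Ga Gai CA) as [IA EA].
  destruct (chi_zpow p q chi beta _ p1 Hchi HLb Gb Gbi CB) as [IB EB].
  destruct Hchi as [_ [Hm _]]. rewrite Hm by auto. rewrite EA, EB, !e2pii_cis, !cis_mul.
  apply cis_eq.
  assert (HP : INR p <> 0) by (apply not_0_INR; lia).
  assert (HQ : INR q <> 0) by (apply not_0_INR; lia).
  apply (f_equal IZR) in Hbez. rewrite plus_IZR, !mult_IZR, <- !INR_IZR_INZ in Hbez.
  rewrite plus_IZR, !mult_IZR, <- !INR_IZR_INZ.
  replace (Q2R k) with (Q2R k * (INR p * IZR p1 + INR q * IZR q1)) at 3 by (rewrite Hbez; ring).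
  field; auto. Qed.
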